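(* Let $\mathbb{A}=(a_{ij})\in\mathbb{R}^{n\times n}$ satisfy $a_{ij}\ge0$ for $i\ne j$ and $a_{jj}=-\sum_{i\ne j}a_{ij}$ for each $j$ (so every column sums to zero). Let $0<\alpha\le1$ and $t\ge0$. Then the matrix $$E_\alpha(\mathbb{A}t^\alpha)=\sum_{k=0}^\infty\frac{t^{\alpha k}\mathbb{A}^k}{\Gamma(\alpha k+1)}$$ is a (column) stochastic matrix: all its entries are nonnegative and each of its columns sums to $1$. *)

(* Defs.v *)
From Stdlib Require Import Reals ClassicalEpsilon.
Open Scope R_scope.

(* Total "Riemann integral": RiemannInt if f is Riemann integrable on [a,b], else 0. *)
Definition RInt (f : R -> R) (a b : R) : R :=
  match excluded_middle_informative (exists pr : Riemann_integrable f a b, True) with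
  | left H => let pr := proj1_sig (constructive_indefinite_description _ H) in RiemannInt pr
  | right _ => 0
  end.

(* Limit of a real sequence (0 if it does not converge). *)
Definition seq_lim (u : nat -> R) : R :=
  match excluded_middle_informative (exists l, Un_cv u l) with
  | left H => proj1_sig (constructive_indefinite_description _ H)
  | right _ => 0
  end.

(* Sum of a real series (0 if it does not converge). *)
Definition series_sum (u : nat -> R) : R :=
  match excluded_middle_informative (exists l, infinite_sum u l) with
  | left H => proj1_sig (constructive_indefinite_description _ H)
  | right _ => 0
  end.

(* Real power for t >= 0, with 0^y = 0 for y <> 0 and 0^0 = 1. *)
Definition rpow (t y : R) : R :=
  if Req_EM_T t 0 then (if Req_EM_T y 0 then 1 else 0) else Rpower t y.

(* Euler Gamma function: Gamma(s) = int_0^oo x^(s-1) e^(-x) dx  (s > 0),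
   as the limit of the integrals over [1/(m+1), m+1]. *)
Definition Gamma (s : R) : R :=
  seq_lim (fun m => RInt (fun x => Rpower x (s - 1) * exp (- x))
                         (/ (INR m + 1)) (INR m + 1)).

(* n x n real matrices as functions of (row, column) indices in {0..n-1}. *)
Definition mat := nat -> nat -> R.

Fixpoint fsum (n : nat) (f : nat -> R) : R :=
  match n with O => 0 | S m => fsum m f + f m end.

Definition matmul (n : nat) (A B : mat) : mat :=
  fun i j => fsum n (fun l => A i l * B l j).

Definition matid : mat := fun i j => if Nat.eqb i j then 1 else 0.

Fixpoint matpow (n : nat) (A : mat) (k : nat) : mat :=
  match k with O => matid | S k' => matmul n A (matpow n A k') end.

Definition ML_term (n : nat) (A : mat) (alpha t : R) (i j k : nat) : R :=
  rpow t (alpha * INR k) * matpow n A k i j / Gamma (alpha * INR k + 1).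

Definition ML_matrix (n : nat) (A : mat) (alpha t : R) : mat :=
  fun i j => series_sum (ML_term n A alpha t i j).

(* Main.v *)
Require Import Defs.
From Coquelicot Require Import Coquelicot.
From Stdlib Require Import Reals Lra Lia Factorial ClassicalEpsilon.
Open Scope R_scope.

Definition pw (x s : R) : R := if Rlt_dec 0 x then Rpower x s else 0.

Lemma pw_pos x s : 0 < x -> pw x s = Rpower x s.
Proof. intros H; unfold pw; destruct (Rlt_dec 0 x); lra. Qed.

Lemma pw_npos x s : x <= 0 -> pw x s = 0.
Proof. intros H; unfold pw; destruct (Rlt_dec 0 x); lra. Qed.

Lemma Rpower_pos x s : 0 < Rpower x s.
Proof. unfold Rpower; apply exp_pos. Qed.

Lemma pw_ge0 x s : 0 <= pw x s.
Proof. unfold pw; destruct (Rlt_dec 0 x); [left; apply Rpower_pos|lra]. Qed.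

Lemma pw_S x s : pw x (s + 1) = x * pw x s.
Proof.
  unfold pw; destruct (Rlt_dec 0 x); [|ring].
  rewrite Rpower_plus, Rpower_1; auto; ring.
Qed.

Lemma pw_small s e : 0 < s -> 0 < e -> exists d, 0 < d /\ forall y, Rabs y < d -> pw y s < e.
Proof.
  intros Hs He. exists (Rpower e (/ s)). split. apply Rpower_pos.
  intros y Hy. destruct (Rlt_dec 0 y) as [Hp|Hn].
  - rewrite pw_pos by auto. rewrite Rabs_right in Hy by lra.
    replace e with (Rpower (Rpower e (/ s)) s).
    apply Rlt_Rpower_l; auto.
    rewrite Rpower_mult. replace (/ s * s) with 1 by (field; lra). apply Rpower_1; auto.
  - rewrite pw_npos by lra. lra.
Qed.

Lemma pw_cont s x : 0 < s -> continuous (fun y => pw y s) x.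
Proof.
  intros Hs.
  destruct (Rtotal_order x 0) as [Hx|[Hx|Hx]].
  - apply continuous_ext_loc with (fun _ => 0).
    exists (mkposreal (-x) ltac:(lra)). intros y Hy. simpl in Hy.
    unfold ball in Hy; simpl in Hy; unfold AbsRing_ball, abs, minus, plus, opp in Hy; simpl in Hy.
    rewrite pw_npos; auto. apply Rabs_lt_between in Hy; lra.
    apply continuous_const.
  - subst x. apply continuity_pt_filterlim.
    intros e He. destruct (pw_small s e Hs He) as [d [Hd H]].
    exists d. split; auto. intros y [_ Hy]. simpl in *. unfold R_dist in *.
    rewrite (pw_npos 0) by lra. rewrite Rminus_0_r in *. rewrite Rabs_right.
    apply H. auto. apply Rle_ge, pw_ge0.
  - apply continuous_ext_loc with (fun y => Rpower y s).
    exists (mkposreal x Hx). intros y Hy. simpl in Hy.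
    unfold ball in Hy; simpl in Hy; unfold AbsRing_ball, abs, minus, plus, opp in Hy; simpl in Hy.
    rewrite pw_pos; auto. apply Rabs_lt_between in Hy; lra.
    apply continuity_pt_filterlim. apply derivable_continuous_pt.
    exists (s * Rpower x (s - 1)). apply derivable_pt_lim_power; auto.
Qed.

Lemma pw_deriv s x : 0 < s -> is_derive (fun y => pw y (s + 1)) x ((s + 1) * pw x s).
Proof.
  intros Hs.
  destruct (Rtotal_order x 0) as [Hx|[Hx|Hx]].
  - apply is_derive_ext_loc with (fun _ => 0).
    exists (mkposreal (-x) ltac:(lra)). intros y Hy. simpl in Hy.
    unfold ball in Hy; simpl in Hy; unfold AbsRing_ball, abs, minus, plus, opp in Hy; simpl in Hy.
    rewrite pw_npos; auto. apply Rabs_lt_between in Hy; lra.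
    rewrite pw_npos by lra. replace ((s+1)*0) with 0 by ring. apply is_derive_Reals, derivable_pt_lim_const.
  - subst x. rewrite (pw_npos 0) by lra. replace ((s+1)*0) with 0 by ring.
    apply is_derive_Reals. intros e He.
    destruct (pw_small s e Hs He) as [d [Hd H]].
    exists (mkposreal d Hd). intros h Hh Hhd. simpl in Hhd.
    rewrite Rplus_0_l, (pw_npos 0) by lra. rewrite pw_S.
    replace ((h * pw h s - 0) / h - 0) with (pw h s) by (field; auto).
    rewrite Rabs_right. apply H; auto. apply Rle_ge, pw_ge0.
  - apply is_derive_ext_loc with (fun y => Rpower y (s+1)).
    exists (mkposreal x Hx). intros y Hy. simpl in Hy.
    unfold ball in Hy; simpl in Hy; unfold AbsRing_ball, abs, minus, plus, opp in Hy; simpl in Hy.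
    rewrite pw_pos; auto. apply Rabs_lt_between in Hy; lra.
    rewrite pw_pos by auto. replace s with (s + 1 - 1) at 2 by ring.
    apply is_derive_Reals. apply derivable_pt_lim_power; auto.
Qed.

Fixpoint prodS (s : R) (N : nat) : R :=
  match N with O => 1 | S M => prodS s M * (s + INR (S M)) end.

Lemma prodS_pos s N : 0 <= s -> 0 < prodS s N.
Proof.
  intros Hs; induction N; simpl prodS. lra.
  apply Rmult_lt_0_compat; auto. change (0 < s + INR (S N)). rewrite S_INR. pose proof (pos_INR N). lra.
Qed.

Lemma prodS_shift s M : prodS s (S M) = (s + 1) * prodS (s + 1) M.
Proof.
  induction M. simpl. lra.
  change (prodS s (S (S M))) with (prodS s (S M) * (s + INR (S (S M)))).
  change (prodS (s+1) (S M)) with (prodS (s+1) M * (s + 1 + INR (S M))).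
  rewrite IHM. rewrite !S_INR. ring.
Qed.

Lemma is_RInt_val (f : R -> R) (a b l l' : R) : is_RInt f a b l -> l = l' -> is_RInt f a b l'.
Proof. intros H ->; auto. Qed.

Lemma Rpower_1_base s : Rpower 1 s = 1.
Proof. unfold Rpower. rewrite ln_1, Rmult_0_r. apply exp_0. Qed.

Lemma beta_is N : forall s, 0 < s ->
  is_RInt (fun u => pw u s * (1 - u) ^ N) 0 1 (INR (fact N) / prodS s (S N)).
Proof.
  induction N; intros s Hs.
  - assert (H := is_RInt_derive (fun y => / (s+1) * pw y (s+1)) (fun y => / (s+1) * ((s+1) * pw y s)) 0 1).
    apply is_RInt_ext with (fun y => / (s+1) * ((s+1) * pw y s)).
    { intros x _. simpl. field. lra. }
    eapply is_RInt_val. apply H.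
    + intros x _. apply is_derive_scal. apply pw_deriv; auto.
    + intros x _. apply continuity_pt_filterlim.
      apply continuity_pt_mult. apply continuity_pt_const; intros ? ?; auto.
      apply continuity_pt_mult. apply continuity_pt_const; intros ? ?; auto.
      apply continuity_pt_filterlim. apply pw_cont; auto.
    + unfold minus, plus, opp; simpl. rewrite pw_pos by lra. rewrite (pw_npos 0) by lra.
      rewrite Rpower_1_base. field. lra.
  - assert (H := is_RInt_minus _ _ _ _ _ _ (IHN s Hs) (IHN (s+1) ltac:(lra))).
    apply is_RInt_ext with (fun y => minus (pw y s * (1 - y) ^ N) (pw y (s + 1) * (1 - y) ^ N)).
    { intros x _. unfold minus, plus, opp; simpl. rewrite pw_S. ring. }
    eapply is_RInt_val. apply H.
    change (INR (fact N) / prodS s (S N) - INR (fact N) / prodS (s+1) (S N) = INR (fact (S N)) / prodS s (S (S N))).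
    assert (HP := prodS_pos s (S N) ltac:(lra)).
    assert (HQ := prodS_pos (s+1) (S N) ltac:(lra)).
    assert (H2 : prodS s (S (S N)) = prodS s (S N) * (s + INR (S (S N)))) by reflexivity.
    assert (H3 := prodS_shift s (S N)). rewrite H2 in H3.
    rewrite H2.
    set (P := prodS s (S N)) in *. set (Q := prodS (s+1) (S N)) in *.
    change (fact (S N)) with (S N * fact N)%nat. rewrite mult_INR.
    rewrite !S_INR in *.
    assert (HQ' : Q = P * (s + (INR N + 1 + 1)) / (s + 1)) by (rewrite H3; field; lra).
    rewrite HQ'. pose proof (pos_INR N). field. repeat split; try lra.
Qed.

Lemma exp_mult_nat (n : nat) (y : R) : exp (INR n * y) = exp y ^ n.
Proof.
  induction n. simpl. rewrite Rmult_0_l. apply exp_0.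
  rewrite S_INR, Rmult_plus_distr_r, Rmult_1_l, exp_plus, IHn. simpl. ring.
Qed.

Lemma pow_diff_le (a b : R) (n : nat) : 0 <= b -> b <= a -> a <= 1 -> a ^ n - b ^ n <= INR n * (a - b).
Proof.
  intros Hb Hba Ha. induction n. simpl. lra.
  rewrite S_INR. simpl.
  assert (0 <= b ^ n <= 1). { split. apply pow_le; auto. replace 1 with (1 ^ n) by apply pow1. apply pow_incr; lra. }
  assert (a * a ^ n - a * b ^ n <= a ^ n - b ^ n).
  { assert (0 <= a ^ n - b ^ n). { assert (b ^ n <= a ^ n) by (apply pow_incr; lra). lra. }
    replace (a * a ^ n - a * b ^ n) with (a * (a ^ n - b ^ n)) by ring.
    assert (a * (a ^ n - b ^ n) <= 1 * (a ^ n - b ^ n)) by (apply Rmult_le_compat_r; lra). lra. }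
  assert (a * b ^ n - b * b ^ n <= a - b).
  { replace (a * b ^ n - b * b ^ n) with ((a - b) * b ^ n) by ring.
    assert ((a - b) * b ^ n <= (a - b) * 1) by (apply Rmult_le_compat_l; lra). lra. }
  lra.
Qed.

Lemma exp_approx (n : nat) (x : R) : (0 < n)%nat -> 0 <= x <= INR n ->
  0 <= 1 - x / INR n /\ (1 - x / INR n) ^ n <= exp (- x) /\
  exp (- x) - x ^ 2 / INR n <= (1 - x / INR n) ^ n.
Proof.
  intros Hn Hx. assert (HN : 0 < INR n) by (apply lt_0_INR; auto).
  set (y := x / INR n).
  assert (Hy : 0 <= y <= 1). { unfold y; split. apply Rmult_le_pos; [lra|left; apply Rinv_0_lt_compat; auto].
    apply Rmult_le_reg_r with (INR n); auto. unfold Rdiv. rewrite Rmult_assoc, Rinv_l by lra. lra. }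
  assert (Hex : exp (- x) = exp (- y) ^ n).
  { rewrite <- exp_mult_nat. f_equal. unfold y. field. lra. }
  assert (H1 : 1 - y <= exp (- y)) by (pose proof (exp_ineq1_le (- y)); lra).
  assert (H2 : exp (- y) <= 1 - y + y ^ 2).
  { assert (Hp : 1 + y <= exp y) by apply exp_ineq1_le.
    rewrite exp_Ropp. apply Rmult_le_reg_l with (exp y). apply exp_pos.
    rewrite Rinv_r by (apply Rgt_not_eq, exp_pos).
    assert (1 <= (1 + y) * (1 - y + y ^ 2)) by (simpl; nra).
    assert ((1 + y) * (1 - y + y ^ 2) <= exp y * (1 - y + y ^ 2)).
    { apply Rmult_le_compat_r; [simpl; nra | lra]. }
    lra. }
  assert (H3 : exp (- y) <= 1) by (rewrite <- exp_0; destruct (Req_dec y 0) as [->|Hy0]; [rewrite Ropp_0; lra| left; apply exp_increasing; lra]).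
  split; [lra|]. split.
  - rewrite Hex. apply pow_incr. lra.
  - rewrite Hex. pose proof (pow_diff_le (exp (- y)) (1 - y) n ltac:(lra) H1 ltac:(lra)).
    assert (INR n * (exp (- y) - (1 - y)) <= INR n * y ^ 2) by (apply Rmult_le_compat_l; lra).
    replace (x ^ 2 / INR n) with (INR n * y ^ 2) by (unfold y; field; lra). lra.
Qed.

Definition gi (s x : R) : R := pw x s * exp (- x).

Lemma gi_cont s x : 0 < s -> continuous (gi s) x.
Proof.
  intros Hs. unfold gi. apply (continuous_mult (fun y => pw y s) (fun y => exp (- y))).
  apply pw_cont; auto. apply continuity_pt_filterlim. reg.
Qed.

Lemma gi_ex s a b : 0 < s -> ex_RInt (gi s) a b.
Proof. intros Hs. apply (ex_RInt_continuous (V:=R_CompleteNormedModule)). intros; apply gi_cont; auto. Qed.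

Lemma gi_ge0 s x : 0 <= gi s x.
Proof. unfold gi. apply Rmult_le_pos. apply pw_ge0. left; apply exp_pos. Qed.

Definition G (s b : R) : R := RInt (gi s) 0 b.

Lemma G_mono s b b' : 0 < s -> 0 <= b <= b' -> G s b <= G s b'.
Proof.
  intros Hs Hb. unfold G.
  assert (H := RInt_Chasles (V:=R_CompleteNormedModule) (gi s) 0 b b' (gi_ex _ _ _ Hs) (gi_ex _ _ _ Hs)).
  assert (0 <= RInt (gi s) b b').
  { apply RInt_ge_0. lra. apply gi_ex; auto. intros; apply gi_ge0. }
  change (plus (RInt (gi s) 0 b) (RInt (gi s) b b')) with (RInt (gi s) 0 b + RInt (gi s) b b') in H. lra.
Qed.

Lemma pw_le1 s x : 0 < s -> x <= 1 -> pw x s <= 1.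
Proof.
  intros Hs Hx. destruct (Rlt_dec 0 x).
  - rewrite pw_pos by auto. rewrite <- (Rpower_1_base s). apply Rle_Rpower_l; lra.
  - rewrite pw_npos by lra. lra.
Qed.

Lemma nat_above (s : R) : exists m : nat, s <= INR m.
Proof.
  destruct (INR_archimed 1 s ltac:(lra)) as [m Hm]. exists m. lra.
Qed.

Lemma gi_bound s : 0 < s -> exists K, 0 < K /\ forall x, 0 <= x -> gi s x <= K * exp (- x / 2).
Proof.
  intros Hs. destruct (nat_above s) as [m0 Hm0]. set (m := S m0).
  assert (Hm : s <= INR m) by (unfold m; rewrite S_INR; lra).
  assert (Hm1 : 1 <= INR m) by (unfold m; rewrite S_INR; pose proof (pos_INR m0); lra).
  exists (1 + (2 * INR m) ^ m). split. pose proof (pow_le (2 * INR m) m ltac:(lra)). lra.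
  intros x Hx. unfold gi.
  assert (Hq : exp (- x) = exp (- x / 2) * exp (- x / 2)) by (rewrite <- exp_plus; f_equal; field).
  assert (Hep := exp_pos (- x / 2)).
  assert (Hpw2 : 0 <= (2 * INR m) ^ m) by (apply pow_le; lra).
  destruct (Rle_dec x 1) as [Hx1|Hx1].
  - assert (pw x s <= 1) by (apply pw_le1; auto).
    assert (exp (- x / 2) <= 1) by (rewrite <- exp_0; destruct (Req_dec x 0) as [->|]; [right; f_equal; field| left; apply exp_increasing; lra]).
    rewrite Hq.
    assert (pw x s * (exp (- x / 2) * exp (- x / 2)) <= 1 * (1 * exp (- x / 2))).
    { apply Rmult_le_compat; try (apply pw_ge0); try lra. apply Rmult_le_pos; lra.
      apply Rmult_le_compat_r; lra. }
    nra.
  - assert (Hp : pw x s <= x ^ m).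
    { rewrite pw_pos by lra. rewrite <- Rpower_pow by lra. apply Rle_Rpower; lra. }
    assert (Hxm : x ^ m <= (2 * INR m) ^ m * exp (x / 2)).
    { assert (Hy : x / (2 * INR m) <= exp (x / (2 * INR m))) by (pose proof (exp_ineq1_le (x / (2 * INR m))); lra).
      assert (Hexp : exp (x / 2) = exp (x / (2 * INR m)) ^ m) by (rewrite <- exp_mult_nat; f_equal; field; lra).
      rewrite Hexp, <- Rpow_mult_distr.
      replace (x ^ m) with (((2 * INR m) * (x / (2 * INR m))) ^ m) by (f_equal; field; lra).
      apply pow_incr. split. apply Rmult_le_pos; [lra|]. apply Rmult_le_pos; [lra|]. left; apply Rinv_0_lt_compat; lra.
      apply Rmult_le_compat_l; lra. }
    assert (Hx2 : exp (x / 2) * exp (- x) = exp (- x / 2)) by (rewrite <- exp_plus; f_equal; field).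
    assert (pw x s * exp (- x) <= (2 * INR m) ^ m * exp (x / 2) * exp (- x)).
    { apply Rmult_le_compat_r. left; apply exp_pos. lra. }
    rewrite Rmult_assoc, Hx2 in H.
    assert ((2 * INR m) ^ m * exp (- x / 2) <= (1 + (2 * INR m) ^ m) * exp (- x / 2)) by (apply Rmult_le_compat_r; lra).
    lra.
Qed.

Lemma G_ub s : 0 < s -> exists C, forall b, 0 <= b -> G s b <= C.
Proof.
  intros Hs. destruct (gi_bound s Hs) as [K [HK Hb]]. exists (2 * K).
  intros b Hb0.
  assert (HI : is_RInt (fun x => K * exp (- x / 2)) 0 b (minus ((fun x => - 2 * K * exp (- x / 2)) b) ((fun x => - 2 * K * exp (- x / 2)) 0))).
  { apply (is_RInt_derive (fun x => - 2 * K * exp (- x / 2))).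
    - intros x _. auto_derive. auto. set (e := exp _). cbv [mult scal plus opp]; simpl. field.
    - intros x _. apply continuity_pt_filterlim. reg. }
  unfold G. eapply Rle_trans. apply (RInt_le _ (fun x => K * exp (- x / 2))); auto.
  apply gi_ex; auto. eexists; apply HI.
  intros x Hx; apply Hb; lra.
  rewrite (is_RInt_unique _ _ _ _ HI). unfold minus, plus, opp; simpl.
  replace (- 0 / 2) with 0 by field. rewrite exp_0.
  assert (0 < exp (- b / 2)) by apply exp_pos. nra.
Qed.

Lemma G_small s a : 0 < s -> 0 <= a <= 1 -> 0 <= G s a <= a.
Proof.
  intros Hs Ha. unfold G. split.
  - apply RInt_ge_0. lra. apply gi_ex; auto. intros; apply gi_ge0.
  - eapply Rle_trans. apply (RInt_le _ (fun _ => 1)). lra. apply gi_ex; auto. apply ex_RInt_const.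
    intros x Hx. unfold gi. assert (pw x s <= 1) by (apply pw_le1; lra).
    assert (exp (- x) <= 1) by (rewrite <- exp_0; left; apply exp_increasing; lra).
    assert (0 <= pw x s) by apply pw_ge0. assert (0 < exp (-x)) by apply exp_pos. nra.
    rewrite RInt_const. unfold scal; simpl; unfold mult; simpl. lra.
Qed.

Lemma pw_scale a y s : 0 < a -> pw (a * y) s = Rpower a s * pw y s.
Proof.
  intros Ha. destruct (Rlt_dec 0 y).
  - rewrite !pw_pos; auto. rewrite Rpower_mult_distr; auto. apply Rmult_lt_0_compat; auto.
  - rewrite !pw_npos; try lra. assert (a * y <= 0) by nra. lra.
Qed.

Lemma scal_R (a b : R) : scal a b = a * b. Proof. reflexivity. Qed.
Lemma mult_R (a b : R) : mult a b = a * b. Proof. reflexivity. Qed.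

Ltac Rn := repeat change (scal ?a ?b) with (Rmult a b); repeat change (mult ?a ?b) with (Rmult a b);
  repeat change (minus ?a ?b) with (Rminus a b); repeat change (plus ?a ?b) with (Rplus a b);
  repeat change (opp ?a) with (Ropp a).
Ltac Rn_in H := repeat change (scal ?a ?b) with (Rmult a b) in H; repeat change (mult ?a ?b) with (Rmult a b) in H;
  repeat change (minus ?a ?b) with (Rminus a b) in H; repeat change (plus ?a ?b) with (Rplus a b) in H;
  repeat change (opp ?a) with (Ropp a) in H.

Definition Jv (s : R) (N : nat) : R := INR N * Rpower (INR N) s * (INR (fact N) / prodS s (S N)).
Definition fJ (s : R) (N : nat) (x : R) : R := pw x s * (1 - x / INR N) ^ N.

Lemma J_is (N : nat) s : (0 < N)%nat -> 0 < s -> is_RInt (fJ s N) 0 (INR N) (Jv s N).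
Proof.
  intros HN Hs. assert (Hn : 0 < INR N) by (apply lt_0_INR; auto).
  set (n := INR N) in *. set (c := n * Rpower n s).
  assert (HB := beta_is N s Hs).
  assert (HS := is_RInt_scal _ _ _ c _ HB).
  assert (HC := is_RInt_comp_lin (fun z => scal c (pw z s * (1 - z) ^ N)) (/ n) 0 0 n (scal c (INR (fact N) / prodS s (S N)))).
  assert (E0 : / n * 0 + 0 = 0) by ring. rewrite E0 in HC. assert (E1 : / n * n + 0 = 1) by (field; lra). rewrite E1 in HC.
  replace (/ n * n + 0) with 1 in HC by (field; try lra).
  specialize (HC HS).
  apply is_RInt_ext with (fun y => scal (/ n) (scal c (pw (/ n * y + 0) s * (1 - (/ n * y + 0)) ^ N))).
  - intros x _. repeat change (scal ?a ?b) with (Rmult a b); repeat change (mult ?a ?b) with (Rmult a b). unfold fJ. fold n.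
    rewrite Rplus_0_r. rewrite pw_scale by (apply Rinv_0_lt_compat; auto).
    unfold c. replace (1 - / n * x) with (1 - x / n) by (field; lra).
    assert (Rpower (/ n) s * Rpower n s = 1).
    { rewrite Rpower_mult_distr. rewrite Rinv_l by lra. apply Rpower_1_base.
      apply Rinv_0_lt_compat; auto. auto. }
    replace (/ n * (n * Rpower n s * (Rpower (/ n) s * pw x s * (1 - x / n) ^ N)))
      with ((Rpower (/ n) s * Rpower n s) * (pw x s * (1 - x / n) ^ N)) by (field; lra).
    rewrite H, Rmult_1_l. reflexivity.
  - eapply is_RInt_val. apply HC. repeat change (scal ?a ?b) with (Rmult a b). unfold Jv, c. fold n. ring.
Qed.

Lemma fJ_cont s N x : 0 < s -> continuous (fJ s N) x.
Proof.
  intros Hs. unfold fJ. apply (continuous_mult (fun y => pw y s) (fun y => (1 - y / INR N) ^ N)).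
  apply pw_cont; auto. apply continuity_pt_filterlim. reg.
Qed.

Lemma fJ_ex s N a b : 0 < s -> ex_RInt (fJ s N) a b.
Proof. intros Hs. apply (ex_RInt_continuous (V:=R_CompleteNormedModule)). intros; apply fJ_cont; auto. Qed.

Lemma Jv_RInt s N : (0 < N)%nat -> 0 < s -> Jv s N = RInt (fJ s N) 0 (INR N).
Proof. intros; symmetry; apply is_RInt_unique, J_is; auto. Qed.

Lemma Jv_le_G s N : (0 < N)%nat -> 0 < s -> Jv s N <= G s (INR N).
Proof.
  intros HN Hs. rewrite Jv_RInt by auto. unfold G. apply RInt_le.
  apply pos_INR. apply fJ_ex; auto. apply gi_ex; auto.
  intros x Hx. unfold fJ, gi. destruct (exp_approx N x HN ltac:(lra)) as [_ [H _]].
  apply Rmult_le_compat_l; auto. apply pw_ge0.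
Qed.

Lemma Jv_ge s M N : (0 < M)%nat -> (M <= N)%nat -> 0 < s ->
  G s (INR M) - INR M * (Rpower (INR M) s * INR M ^ 2 / INR N) <= Jv s N.
Proof.
  intros HM HMN Hs.
  assert (HN : (0 < N)%nat) by lia.
  assert (HMr : 0 < INR M) by (apply lt_0_INR; auto).
  assert (HMNr : INR M <= INR N) by (apply le_INR; auto).
  rewrite Jv_RInt by auto.
  set (c := Rpower (INR M) s * INR M ^ 2 / INR N).
  assert (H := RInt_Chasles (V:=R_CompleteNormedModule) (fJ s N) 0 (INR M) (INR N) (fJ_ex _ _ _ _ Hs) (fJ_ex _ _ _ _ Hs)).
  change (plus (RInt (fJ s N) 0 (INR M)) (RInt (fJ s N) (INR M) (INR N))) with (RInt (fJ s N) 0 (INR M) + RInt (fJ s N) (INR M) (INR N)) in H.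
  assert (H1 : 0 <= RInt (fJ s N) (INR M) (INR N)).
  { apply RInt_ge_0; auto. apply fJ_ex; auto. intros x Hx. unfold fJ.
    destruct (exp_approx N x HN ltac:(lra)) as [H0 _].
    apply Rmult_le_pos. apply pw_ge0. apply pow_le; auto. }
  assert (H2 : minus (RInt (gi s) 0 (INR M)) (scal (INR M - 0) c) <= RInt (fJ s N) 0 (INR M)).
  { assert (HI := is_RInt_minus _ _ _ _ _ _ (RInt_correct (gi s) 0 (INR M) (gi_ex _ _ _ Hs)) (is_RInt_const (V:=R_NormedModule) 0 (INR M) c)).
    apply (is_RInt_le _ _ 0 (INR M) _ _ ltac:(lra) HI (RInt_correct _ _ _ (fJ_ex _ _ _ _ Hs))).
    intros x Hx. change (minus (gi s x) c <= fJ s N x).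
    unfold minus, plus, opp; simpl. unfold gi, fJ.
    destruct (exp_approx N x HN ltac:(lra)) as [_ [_ H3]].
    assert (Hp : pw x s <= Rpower (INR M) s) by (rewrite pw_pos by lra; apply Rle_Rpower_l; lra).
    assert (Hp0 := pw_ge0 x s).
    assert (HNr : 0 < INR N) by (apply lt_0_INR; auto).
    assert (Hx2 : x ^ 2 / INR N <= INR M ^ 2 / INR N).
    { unfold Rdiv. apply Rmult_le_compat_r. left; apply Rinv_0_lt_compat; auto. apply pow_incr; lra. }
    assert (Hq : 0 <= x ^ 2 / INR N) by (unfold Rdiv; apply Rmult_le_pos; [apply pow2_ge_0| left; apply Rinv_0_lt_compat; auto]).
    assert (pw x s * (x ^ 2 / INR N) <= Rpower (INR M) s * (INR M ^ 2 / INR N)) by (apply Rmult_le_compat; lra).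
    assert (H4 : pw x s * (exp (- x) - x ^ 2 / INR N) <= pw x s * (1 - x / INR N) ^ N) by (apply Rmult_le_compat_l; lra).
    rewrite Rmult_minus_distr_l in H4.
    replace c with (Rpower (INR M) s * (INR M ^ 2 / INR N)) by (unfold c, Rdiv; ring). lra. }
  Rn_in H2.
  replace (INR M - 0) with (INR M) in H2 by ring. unfold G. lra.
Qed.

Lemma G_cv s : 0 < s -> exists L, Un_cv (fun m => G s (INR m)) L /\ (forall m, G s (INR m) <= L).
Proof.
  intros Hs.
  assert (Hg : Un_growing (fun m => G s (INR m))).
  { intros n. apply G_mono; auto. split. apply pos_INR. rewrite S_INR; lra. }
  destruct (G_ub s Hs) as [C HC].
  assert (Hb : has_ub (fun m => G s (INR m))).
  { exists C. intros x [i ->]. apply HC, pos_INR. }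
  destruct (growing_cv _ Hg Hb) as [L HL]. exists L. split; auto.
  apply growing_ineq; auto.
Qed.

Lemma Jv_pos s N : (0 < N)%nat -> 0 < s -> 0 < Jv s N.
Proof.
  intros HN Hs. unfold Jv.
  assert (0 < INR N) by (apply lt_0_INR; auto).
  apply Rmult_lt_0_compat. apply Rmult_lt_0_compat; auto. apply Rpower_pos.
  apply Rdiv_lt_0_compat. apply INR_fact_lt_0. apply prodS_pos; lra.
Qed.

Lemma J_cv s L : 0 < s -> Un_cv (fun m => G s (INR m)) L -> (forall m, G s (INR m) <= L) ->
  Un_cv (fun n => Jv s (S n)) L.
Proof.
  intros Hs HL HLb e He.
  destruct (HL (e / 2) ltac:(lra)) as [m1 Hm1].
  set (M := S m1).
  assert (HGM : L - e / 2 < G s (INR M)).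
  { specialize (Hm1 M ltac:(unfold M; lia)). unfold R_dist in Hm1. apply Rabs_lt_between in Hm1. lra. }
  set (K := INR M * (Rpower (INR M) s * INR M ^ 2)).
  assert (HK : 0 <= K).
  { unfold K. apply Rmult_le_pos. apply pos_INR. apply Rmult_le_pos. left; apply Rpower_pos. apply pow_le, pos_INR. }
  destruct (INR_archimed (e / 2) K ltac:(lra)) as [N1 HN1].
  exists (max M N1). intros n Hn. unfold R_dist.
  assert (HSn : (0 < S n)%nat) by lia.
  assert (Hup : Jv s (S n) <= L) by (eapply Rle_trans; [apply Jv_le_G; auto| apply HLb]).
  assert (Hlo := Jv_ge s M (S n) ltac:(unfold M; lia) ltac:(lia) Hs).
  assert (HSr : INR N1 < INR (S n)) by (apply lt_INR; lia).
  assert (Hpos : 0 < INR (S n)) by (apply lt_0_INR; lia).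
  assert (Hc : INR M * (Rpower (INR M) s * INR M ^ 2 / INR (S n)) < e / 2).
  { replace (INR M * (Rpower (INR M) s * INR M ^ 2 / INR (S n))) with (K / INR (S n)) by (unfold K; field; lra).
    apply Rmult_lt_reg_r with (INR (S n)); auto. unfold Rdiv. rewrite Rmult_assoc, Rinv_l by lra.
    assert (INR N1 * (e / 2) <= INR (S n) * (e / 2)) by (apply Rmult_le_compat_r; lra). lra. }
  apply Rabs_lt_between. lra.
Qed.

Lemma DRInt_eq f a b : ex_RInt f a b -> Defs.RInt f a b = RInt f a b.
Proof.
  intros Hex. unfold Defs.RInt.
  destruct (excluded_middle_informative _) as [H|H].
  - destruct (constructive_indefinite_description _ H) as [pr HH]. simpl.
    symmetry. apply is_RInt_unique. apply ex_RInt_Reals_aux_1.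
  - exfalso. apply H. exists (ex_RInt_Reals_0 _ _ _ Hex). auto.
Qed.

Lemma seq_lim_eq u l : Un_cv u l -> seq_lim u = l.
Proof.
  intros H. unfold seq_lim. destruct (excluded_middle_informative _) as [H1|H1].
  - destruct (constructive_indefinite_description _ H1) as [l' Hl']. simpl. eapply UL_sequence; eauto.
  - exfalso. apply H1. eauto.
Qed.

Lemma Un_cv_ext (u v : nat -> R) l : (forall n, u n = v n) -> Un_cv u l -> Un_cv v l.
Proof. intros He H e Hep. destruct (H e Hep) as [N HN]. exists N. intros n Hn. rewrite <- He. auto. Qed.

Lemma inv_cv0 : Un_cv (fun m => / (INR m + 1)) 0.
Proof.
  intros e He. destruct (archimed_cor1 e He) as [N [HN HN0]]. exists N. intros n Hn. unfold R_dist.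
  rewrite Rminus_0_r, Rabs_right by (left; apply RinvN_pos).
  apply Rle_lt_trans with (/ INR N); auto. apply Rinv_le_contravar. apply lt_0_INR; auto.
  assert (INR N <= INR n) by (apply le_INR; lia). lra.
Qed.

Lemma Gamma_eq s L : 0 < s -> Un_cv (fun m => G s (INR m)) L -> Gamma (s + 1) = L.
Proof.
  intros Hs HL. unfold Gamma. apply seq_lim_eq.
  apply Un_cv_ext with (fun m => G s (INR (S m)) - G s (/ (INR m + 1))).
  - intros m. set (a := / (INR m + 1)). set (b := INR m + 1).
    assert (Ha : 0 < a) by apply RinvN_pos.
    assert (Hab : a <= b).
    { unfold a, b. pose proof (pos_INR m). apply Rle_trans with 1.
      rewrite <- Rinv_1. apply Rinv_le_contravar; lra. lra. }
    assert (Hext : forall x, Rmin a b < x < Rmax a b -> gi s x = Rpower x (s + 1 - 1) * exp (- x)).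
    { intros x Hx. rewrite Rmin_left, Rmax_right in Hx by lra. unfold gi. rewrite pw_pos by lra.
      replace (s + 1 - 1) with s by ring. reflexivity. }
    rewrite DRInt_eq by (eapply ex_RInt_ext; [apply Hext| apply gi_ex; auto]).
    rewrite <- (RInt_ext (gi s)) by auto.
    assert (H := RInt_Chasles (V:=R_CompleteNormedModule) (gi s) 0 a b (gi_ex _ _ _ Hs) (gi_ex _ _ _ Hs)).
    Rn_in H. unfold G. rewrite S_INR. fold b. lra.
  - replace L with (L - 0) by ring. apply CV_minus.
    + apply Un_cv_ext with (fun n => G s (INR (n + 1))); [intros n; f_equal; f_equal; lia|].
      apply (CV_shift' (fun m => G s (INR m)) 1 L HL).
    + intros e He. destruct (inv_cv0 e He) as [N HN]. exists N. intros n Hn.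
      specialize (HN n Hn). unfold R_dist in *. rewrite Rminus_0_r in *.
      assert (H0 := RinvN_pos n).
      assert (H1 : / (INR n + 1) <= 1) by (rewrite <- Rinv_1; apply Rinv_le_contravar; [lra| pose proof (pos_INR n); lra]).
      destruct (G_small s (/ (INR n + 1)) Hs ltac:(lra)).
      rewrite Rabs_right in * by lra. lra.
Qed.

Fixpoint cf (b : R) (N : nat) : R :=
  match N with O => 1 | S M => cf b M * (INR M + b) / INR (S M) end.

Lemma cf_prodS s N : cf (s + 1) N * INR (fact N) = prodS s N.
Proof.
  induction N. simpl. lra.
  change (cf (s+1) (S N)) with (cf (s+1) N * (INR N + (s + 1)) / INR (S N)).
  change (prodS s (S N)) with (prodS s N * (s + INR (S N))).
  change (fact (S N)) with (S N * fact N)%nat. rewrite mult_INR, <- IHN.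
  rewrite S_INR. pose proof (pos_INR N). field. lra.
Qed.

Definition rN (s : R) (N : nat) : R := cf (s + 1) N / Rpower (INR N) s.

Lemma rN_eq s N : (0 < N)%nat -> 0 < s -> rN s N = INR N / ((s + INR N + 1) * Jv s N).
Proof.
  intros HN Hs. unfold rN, Jv.
  assert (HNr : 0 < INR N) by (apply lt_0_INR; auto).
  assert (Hf := INR_fact_lt_0 N).
  assert (Hp := prodS_pos s N ltac:(lra)).
  assert (Hr := Rpower_pos (INR N) s).
  change (prodS s (S N)) with (prodS s N * (s + INR (S N))). rewrite S_INR.
  rewrite <- cf_prodS in *.
  assert (cf (s + 1) N <> 0) by (intro Hc; rewrite Hc in Hp; lra).
  field. repeat split; try lra.
Qed.

Lemma ratio_cv s : 0 <= s -> Un_cv (fun n => INR (S n) / (s + INR (S n) + 1)) 1.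
Proof.
  intros Hs e He.
  destruct (inv_cv0 (e / (s + 1)) ltac:(apply Rdiv_lt_0_compat; lra)) as [N HN].
  exists N. intros n Hn. specialize (HN n Hn). unfold R_dist in *.
  rewrite Rminus_0_r, Rabs_right in HN by (left; apply RinvN_pos).
  rewrite S_INR. pose proof (pos_INR n).
  replace ((INR n + 1) / (s + (INR n + 1) + 1) - 1) with (- ((s + 1) / (s + INR n + 2))) by (field; lra).
  rewrite Rabs_Ropp, Rabs_right by (left; apply Rdiv_lt_0_compat; lra).
  apply Rle_lt_trans with ((s + 1) * / (INR n + 1)).
  unfold Rdiv. apply Rmult_le_compat_l. lra. apply Rinv_le_contravar; lra.
  apply Rmult_lt_reg_r with (/ (s + 1)). apply Rinv_0_lt_compat; lra.
  replace ((s + 1) * / (INR n + 1) * / (s + 1)) with (/ (INR n + 1)) by (field; lra).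
  unfold Rdiv in HN. auto.
Qed.

Lemma euler s : 0 < s -> 0 < Gamma (s + 1) /\ Un_cv (fun n => rN s (S n)) (/ Gamma (s + 1)).
Proof.
  intros Hs. destruct (G_cv s Hs) as [L [HL HLb]].
  rewrite (Gamma_eq s L Hs HL).
  assert (HJ := J_cv s L Hs HL HLb).
  assert (HLp : 0 < L).
  { apply Rlt_le_trans with (Jv s 1). apply Jv_pos; auto.
    apply Rle_trans with (G s (INR 1)). apply Jv_le_G; auto. apply HLb. }
  split; auto.
  apply Un_cv_ext with (fun n => INR (S n) / (s + INR (S n) + 1) * / Jv s (S n)).
  { intros n. rewrite rN_eq by (auto; lia). assert (0 < Jv s (S n)) by (apply Jv_pos; auto; lia).
    pose proof (pos_INR (S n)). field. lra. }
  replace (/ L) with (1 * / L) by ring. apply CV_mult. apply ratio_cv; lra.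
  apply is_lim_seq_Reals. apply is_lim_seq_Reals in HJ.
  apply (is_lim_seq_inv _ L) in HJ. auto. intro Hc. injection Hc. lra.
Qed.

Lemma ln_le_sub1 u : 0 < u -> ln u <= u - 1.
Proof.
  intros Hu. rewrite <- (ln_exp (u - 1)). apply ln_le; auto.
  pose proof (exp_ineq1_le (u - 1)). lra.
Qed.

Lemma exp_le_mono x y : x <= y -> exp x <= exp y.
Proof. intros [H|H]. left; apply exp_increasing; auto. subst; lra. Qed.

Lemma cf_pos b N : 0 < b -> 0 < cf b N.
Proof.
  intros Hb. induction N. simpl; lra.
  change (cf b (S N)) with (cf b N * (INR N + b) / INR (S N)).
  apply Rdiv_lt_0_compat. apply Rmult_lt_0_compat; auto. pose proof (pos_INR N); lra.
  apply lt_0_INR; lia.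
Qed.

Lemma rN_pos s N : 0 <= s -> 0 < rN s N.
Proof. intros Hs. unfold rN. apply Rdiv_lt_0_compat. apply cf_pos; lra. apply Rpower_pos. Qed.

Lemma rN_decr s N : (0 < N)%nat -> 0 <= s -> rN s (S N) <= rN s N.
Proof.
  intros HN Hs. unfold rN.
  assert (HNr : 0 < INR N) by (apply lt_0_INR; auto).
  change (cf (s+1) (S N)) with (cf (s+1) N * (INR N + (s + 1)) / INR (S N)).
  rewrite S_INR.
  assert (Hc := cf_pos (s+1) N ltac:(lra)).
  assert (Hsplit : Rpower (INR N + 1) s = Rpower (INR N) s * Rpower ((INR N + 1) / INR N) s).
  { rewrite Rpower_mult_distr by (try apply Rdiv_lt_0_compat; lra). f_equal. field. lra. }
  assert (Hk : 1 + s / (INR N + 1) <= Rpower ((INR N + 1) / INR N) s).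
  { unfold Rpower. apply Rle_trans with (exp (s / (INR N + 1))).
    apply exp_ineq1_le. apply exp_le_mono.
    assert (/ (INR N + 1) <= ln ((INR N + 1) / INR N)).
    { replace ((INR N + 1) / INR N) with (/ (INR N / (INR N + 1))) by (field; lra).
      rewrite ln_Rinv by (apply Rdiv_lt_0_compat; lra).
      pose proof (ln_le_sub1 (INR N / (INR N + 1)) ltac:(apply Rdiv_lt_0_compat; lra)).
      replace (INR N / (INR N + 1) - 1) with (- / (INR N + 1)) in H by (field; lra). lra. }
    unfold Rdiv. apply Rmult_le_compat_l; lra. }
  rewrite Hsplit.
  assert (Hr := Rpower_pos (INR N) s).
  assert (Hr2 := Rpower_pos ((INR N + 1) / INR N) s).
  apply Rmult_le_reg_r with (Rpower (INR N) s * Rpower ((INR N + 1) / INR N) s). nra.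
  replace (cf (s + 1) N * (INR N + (s + 1)) / (INR N + 1) / (Rpower (INR N) s * Rpower ((INR N + 1) / INR N) s) *
   (Rpower (INR N) s * Rpower ((INR N + 1) / INR N) s)) with (cf (s + 1) N * (1 + s / (INR N + 1))) by (field; lra).
  replace (cf (s + 1) N / Rpower (INR N) s * (Rpower (INR N) s * Rpower ((INR N + 1) / INR N) s))
    with (cf (s + 1) N * Rpower ((INR N + 1) / INR N) s) by (field; lra).
  apply Rmult_le_compat_l; lra.
Qed.

Lemma Gamma1 : Gamma 1 = 1.
Proof.
  unfold Gamma. apply seq_lim_eq.
  apply Un_cv_ext with (fun m => exp (- / (INR m + 1)) - exp (- (INR m + 1))).
  - intros m. set (a := / (INR m + 1)). set (b := INR m + 1).
    assert (Ha : 0 < a) by apply RinvN_pos.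
    assert (Hab : a <= b).
    { unfold a, b. pose proof (pos_INR m). apply Rle_trans with 1.
      rewrite <- Rinv_1. apply Rinv_le_contravar; lra. lra. }
    assert (HI : is_RInt (fun x => exp (- x)) a b (minus ((fun x => - exp (- x)) b) ((fun x => - exp (- x)) a))).
    { apply (is_RInt_derive (fun x => - exp (- x))).
      - intros x _. auto_derive. auto. cbv [mult scal plus opp]; simpl. ring.
      - intros x _. apply continuity_pt_filterlim. reg. }
    assert (Hext : forall x, Rmin a b < x < Rmax a b -> exp (- x) = Rpower x (1 - 1) * exp (- x)).
    { intros x Hx. rewrite Rmin_left, Rmax_right in Hx by lra. replace (1 - 1) with 0 by ring.
      rewrite Rpower_O by lra. ring. }
    rewrite DRInt_eq by (eapply ex_RInt_ext; [apply Hext| eexists; apply HI]).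
    rewrite <- (RInt_ext _ _ _ _ Hext). rewrite (is_RInt_unique _ _ _ _ HI). Rn. ring.
  - replace 1 with (1 - 0) at 1 by ring. apply CV_minus.
    + assert (H := continuity_seq (fun x => exp (- x)) (fun m => / (INR m + 1)) 0 ltac:(reg) inv_cv0).
      simpl in H. rewrite Ropp_0, exp_0 in H. exact H.
    + intros e He. destruct (inv_cv0 e He) as [N HN]. exists N. intros n Hn.
      specialize (HN n Hn). unfold R_dist in *. rewrite Rminus_0_r in *.
      pose proof (pos_INR n).
      assert (H1 : exp (- (INR n + 1)) <= / (INR n + 1)).
      { rewrite exp_Ropp. apply Rinv_le_contravar. lra. pose proof (exp_ineq1_le (INR n + 1)). lra. }
      assert (H2 := exp_pos (- (INR n + 1))).
      assert (H3 := RinvN_pos n).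
      rewrite Rabs_right in * by lra. lra.
Qed.

Lemma fsum_ext n f g : (forall i, (i < n)%nat -> f i = g i) -> fsum n f = fsum n g.
Proof. induction n; intros H; simpl; auto. rewrite IHn, H; auto. Qed.

Lemma fsum_plus n f g : fsum n (fun i => f i + g i) = fsum n f + fsum n g.
Proof. induction n; simpl. ring. rewrite IHn; ring. Qed.

Lemma fsum_scal n c f : fsum n (fun i => c * f i) = c * fsum n f.
Proof. induction n; simpl. ring. rewrite IHn; ring. Qed.

Lemma fsum_shift n f : fsum (S n) f = f O + fsum n (fun i => f (S i)).
Proof. induction n; simpl in *. ring. rewrite IHn. ring. Qed.

Lemma fsum_zero n f : (forall i, (i < n)%nat -> f i = 0) -> fsum n f = 0.
Proof. intros H. rewrite (fsum_ext n f (fun _ => 0)); auto. induction n; simpl; auto. rewrite IHn; [ring|]. auto. Qed.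

Lemma fsum_le n f g : (forall i, (i < n)%nat -> f i <= g i) -> fsum n f <= fsum n g.
Proof. induction n; intros H; simpl. lra. apply Rplus_le_compat; auto. Qed.

Lemma fsum_ge0 n f : (forall i, (i < n)%nat -> 0 <= f i) -> 0 <= fsum n f.
Proof. intros H. apply Rle_trans with (fsum n (fun _ => 0)). rewrite fsum_zero; auto; lra. apply fsum_le; auto. Qed.

Lemma fsum_swap n m (f : nat -> nat -> R) :
  fsum n (fun i => fsum m (fun j => f i j)) = fsum m (fun j => fsum n (fun i => f i j)).
Proof.
  induction n; simpl. rewrite fsum_zero; auto.
  rewrite IHn, <- fsum_plus. reflexivity.
Qed.

Lemma fsum_abs n f : Rabs (fsum n f) <= fsum n (fun i => Rabs (f i)).
Proof. induction n; simpl. rewrite Rabs_R0; lra. eapply Rle_trans. apply Rabs_triang. lra. Qed.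

Lemma cf_S b j : cf b (S j) * INR (S j) = cf b j * (INR j + b).
Proof. change (cf b (S j)) with (cf b j * (INR j + b) / INR (S j)). field. apply not_0_INR; lia. Qed.

Definition Vd (b c : R) (M : nat) : R := fsum (S M) (fun j => cf b j * cf c (M - j)).

Lemma Vd_rec b c M : INR (S M) * Vd b c (S M) = (INR M + b + c) * Vd b c M.
Proof.
  unfold Vd. rewrite <- (fsum_scal (S (S M))).
  rewrite (fsum_ext (S (S M)) _ (fun j => INR j * (cf b j * cf c (S M - j)) + cf b j * (INR (S M - j) * cf c (S M - j)))).
  2: { intros i Hi. rewrite (minus_INR (S M) i) by lia. ring. }
  rewrite fsum_plus.
  rewrite fsum_shift. simpl (INR 0).
  rewrite (fsum_ext (S M) (fun i => INR (S i) * (cf b (S i) * cf c (S M - S i))) (fun i => (INR i + b) * cf b i * cf c (M - i))).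
  2: { intros i Hi. replace (S M - S i)%nat with (M - i)%nat by lia.
      transitivity ((cf b (S i) * INR (S i)) * cf c (M - i)); [ring| rewrite cf_S; ring]. }
  change (fsum (S (S M)) (fun j => cf b j * (INR (S M - j) * cf c (S M - j))))
    with (fsum (S M) (fun j => cf b j * (INR (S M - j) * cf c (S M - j))) + cf b (S M) * (INR (S M - S M) * cf c (S M - S M))).
  rewrite Nat.sub_diag. simpl (INR 0).
  rewrite (fsum_ext (S M) (fun j => cf b j * (INR (S M - j) * cf c (S M - j))) (fun j => cf b j * ((INR (M - j) + c) * cf c (M - j)))).
  2: { intros i Hi. replace (S M - i)%nat with (S (M - i)) by lia.
      transitivity (cf b i * (cf c (S (M - i)) * INR (S (M - i)))); [ring| rewrite cf_S; ring]. }
  rewrite <- fsum_scal.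
  replace (0 * (cf b 0 * cf c (S M - 0)) +
    fsum (S M) (fun i : nat => (INR i + b) * cf b i * cf c (M - i)) +
    (fsum (S M) (fun j : nat => cf b j * ((INR (M - j) + c) * cf c (M - j))) +
     cf b (S M) * (0 * cf c 0))) with
    (fsum (S M) (fun i : nat => (INR i + b) * cf b i * cf c (M - i)) +
    fsum (S M) (fun j : nat => cf b j * ((INR (M - j) + c) * cf c (M - j)))) by ring.
  rewrite <- fsum_plus. apply fsum_ext. intros i Hi. rewrite minus_INR by lia. ring.
Qed.

Lemma vandermonde b c M : Vd b c M = cf (b + c) M.
Proof.
  induction M. unfold Vd. simpl. ring.
  assert (H := Vd_rec b c M). rewrite IHM in H.
  change (cf (b + c) (S M)) with (cf (b + c) M * (INR M + (b + c)) / INR (S M)).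
  apply Rmult_eq_reg_l with (INR (S M)). rewrite H. field. apply not_0_INR; lia. apply not_0_INR; lia.
Qed.

Lemma cf_one M : cf 1 M = 1.
Proof. induction M. reflexivity. change (cf 1 (S M)) with (cf 1 M * (INR M + 1) / INR (S M)). rewrite IHM, S_INR. field. pose proof (pos_INR M); lra. Qed.

Lemma cf_nonneg b M : 0 <= b -> 0 <= cf b M.
Proof.
  intros Hb. induction M. simpl; lra.
  change (cf b (S M)) with (cf b M * (INR M + b) / INR (S M)).
  apply Rmult_le_pos. apply Rmult_le_pos; auto. pose proof (pos_INR M); lra.
  left; apply Rinv_0_lt_compat, lt_0_INR; lia.
Qed.

Lemma cf_negalpha a j : 0 < a <= 1 -> (0 < j)%nat -> cf (- a) j <= 0.
Proof.
  intros Ha Hj. induction j. lia.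
  change (cf (- a) (S j)) with (cf (- a) j * (INR j + - a) / INR (S j)).
  destruct j.
  - simpl. lra.
  - assert (H := IHj ltac:(lia)). assert (1 <= INR (S j)) by (rewrite S_INR; pose proof (pos_INR j); lra).
    assert (H1 : cf (- a) (S j) * (INR (S j) + - a) <= 0) by nra.
    assert (H2 : 0 < / INR (S (S j))) by (apply Rinv_0_lt_compat, lt_0_INR; lia).
    unfold Rdiv. nra.
Qed.

Lemma sum_cf_neg a M : fsum (S M) (fun j => cf (- a) j) = cf (1 - a) M.
Proof.
  replace (1 - a) with (- a + 1) by ring. rewrite <- vandermonde. unfold Vd.
  apply fsum_ext. intros; rewrite cf_one; ring.
Qed.

Lemma fsum_term_le n f k : (forall i, (i < n)%nat -> 0 <= f i) -> (k < n)%nat -> f k <= fsum n f.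
Proof.
  induction n; intros H Hk. lia. simpl.
  destruct (Nat.eq_dec k n) as [->|Hne].
  - assert (0 <= fsum n f) by (apply fsum_ge0; auto). lra.
  - assert (f k <= fsum n f) by (apply IHn; auto; lia). assert (0 <= f n) by auto. lra.
Qed.

Lemma fsum_delta n j c : (j < n)%nat -> fsum n (fun i => if Nat.eqb i j then c else 0) = c.
Proof.
  induction n; intros Hj. lia. simpl.
  destruct (Nat.eq_dec j n) as [->|Hne].
  - rewrite Nat.eqb_refl. rewrite fsum_zero. ring. intros i Hi. destruct (Nat.eqb_spec i n); [lia|auto].
  - rewrite IHn by lia. destruct (Nat.eqb_spec n j); [lia|ring].
Qed.

Lemma fsum_mult_r n f c : fsum n (fun i => f i * c) = fsum n f * c.
Proof. induction n; simpl. ring. rewrite IHn; ring. Qed.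

Lemma colsum_zero n A j : (j < n)%nat ->
  A j j = - fsum n (fun i => if Nat.eqb i j then 0 else A i j) ->
  fsum n (fun i => A i j) = 0.
Proof.
  intros Hj Hd.
  rewrite (fsum_ext n _ (fun i => (if Nat.eqb i j then 0 else A i j) + (if Nat.eqb i j then A j j else 0))).
  2: { intros i Hi. destruct (Nat.eqb_spec i j); subst; ring. }
  rewrite fsum_plus, fsum_delta by auto. lra.
Qed.

Lemma matpow_colsum n A k j : (j < n)%nat -> (forall l, (l < n)%nat -> fsum n (fun i => A i l) = 0) ->
  fsum n (fun i => matpow n A (S k) i j) = 0.
Proof.
  intros Hj Hc. simpl. unfold matmul.
  rewrite fsum_swap. apply fsum_zero. intros l Hl.
  rewrite fsum_mult_r, Hc by auto. ring.
Qed.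

Lemma matid_colsum n j : (j < n)%nat -> fsum n (fun i => matid i j) = 1.
Proof. intros Hj. unfold matid. apply fsum_delta; auto. Qed.

Lemma fsum_const n c : fsum n (fun _ => c) = INR n * c.
Proof. induction n; simpl fsum. rewrite INR_0; ring. rewrite IHn, S_INR; ring. Qed.

Lemma matpow_bound n A a k i j : (forall i l, (i < n)%nat -> (l < n)%nat -> Rabs (A i l) <= a) ->
  (i < n)%nat -> (j < n)%nat -> Rabs (matpow n A k i j) <= (INR n * a) ^ k.
Proof.
  intros Ha. revert i j. induction k; intros i j Hi Hj.
  - simpl. unfold matid. destruct (Nat.eqb i j); rewrite ?Rabs_R1, ?Rabs_R0; lra.
  - simpl matpow. unfold matmul. eapply Rle_trans. apply fsum_abs.
    eapply Rle_trans. apply (fsum_le n _ (fun _ => a * (INR n * a) ^ k)).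
    { intros l Hl. rewrite Rabs_mult. apply Rmult_le_compat; try apply Rabs_pos; auto. }
    clear IHk. replace ((INR n * a) ^ S k) with (INR n * (a * (INR n * a) ^ k)) by (simpl; ring).
    rewrite fsum_const. lra.
Qed.

Lemma argmin n (f : nat -> R) : (0 < n)%nat -> exists i0, (i0 < n)%nat /\ forall i, (i < n)%nat -> f i0 <= f i.
Proof.
  induction n; intros Hn. lia.
  destruct n. exists O. split. lia. intros i Hi. replace i with O by lia. lra.
  destruct (IHn ltac:(lia)) as [i1 [Hi1 H1]].
  destruct (Rle_dec (f i1) (f (S n))).
  - exists i1. split. lia. intros i Hi. destruct (Nat.eq_dec i (S n)) as [->|]; auto. apply H1; lia.
  - exists (S n). split. lia. intros i Hi. destruct (Nat.eq_dec i (S n)) as [->|]. lra.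
    specialize (H1 i ltac:(lia)). lra.
Qed.

Lemma disc_pos n A h (v R0 : nat -> R) :
  (forall i l, (i < n)%nat -> (l < n)%nat -> i <> l -> 0 <= A i l) ->
  0 <= h -> (forall i, (i < n)%nat -> h * fsum n (fun l => Rabs (A i l)) < 1) ->
  (forall i, (i < n)%nat -> 0 <= R0 i) ->
  (forall i, (i < n)%nat -> v i - h * fsum n (fun l => A i l * v l) = R0 i) ->
  forall i, (i < n)%nat -> 0 <= v i.
Proof.
  intros Hoff Hh Hrow HR Heq i Hi.
  destruct (argmin n v ltac:(lia)) as [i0 [Hi0 Hmin]].
  apply Rle_trans with (v i0); [|auto].
  destruct (Rle_dec 0 (v i0)) as [|Hneg]; auto. exfalso.
  assert (H1 : fsum n (fun l => A i0 l * v i0) <= fsum n (fun l => A i0 l * v l)).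
  { apply fsum_le. intros l Hl. destruct (Nat.eq_dec i0 l) as [->|Hne]. lra.
    apply Rmult_le_compat_l; auto. }
  rewrite fsum_mult_r in H1.
  assert (H2 : fsum n (fun l => A i0 l) <= fsum n (fun l => Rabs (A i0 l))) by (apply fsum_le; intros; apply Rle_abs).
  specialize (Hrow i0 Hi0). specialize (HR i0 Hi0). specialize (Heq i0 Hi0).
  assert (h * fsum n (fun l => A i0 l) < 1) by nra.
  assert (h * (fsum n (fun l => A i0 l) * v i0) <= h * fsum n (fun l => A i0 l * v l)) by (apply Rmult_le_compat_l; auto).
  nra.
Qed.

Lemma is_series_Rplus (a b : nat -> R) la lb : is_series a la -> is_series b lb -> is_series (fun k => a k + b k) (la + lb).
Proof. intros Ha Hb. exact (is_series_plus a b la lb Ha Hb). Qed.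

Lemma is_series_Rscal c (a : nat -> R) l : is_series a l -> is_series (fun k => c * a k) (c * l).
Proof. intros Ha. exact (is_series_scal c a l Ha). Qed.

Lemma is_series_R0 : is_series (fun _ : nat => 0) 0.
Proof.
  assert (H := is_series_geom (/ 2) ltac:(rewrite Rabs_right; lra)).
  apply is_series_Rscal with (c := 0) in H. rewrite Rmult_0_l in H.
  eapply is_series_ext; [|apply H]. intros; simpl; ring.
Qed.

Lemma is_series_Rshift (a : nat -> R) l : is_series a l -> is_series (fun k => a (S k)) (l - a O).
Proof.
  intros H. apply is_series_incr_1. match goal with |- is_series _ ?p => replace p with l end. exact H.
  symmetry. change (Rplus (Rminus l (a O)) (a O) = l). unfold Rminus. rewrite Rplus_assoc, Rplus_opp_l, Rplus_0_r. reflexivity.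
Qed.

Lemma is_series_fsum n (f : nat -> nat -> R) (s : nat -> R) :
  (forall l, (l < n)%nat -> is_series (f l) (s l)) ->
  is_series (fun k => fsum n (fun l => f l k)) (fsum n s).
Proof.
  induction n; intros H; simpl. apply is_series_R0.
  apply is_series_Rplus. apply IHn; auto. apply H; lia.
Qed.

Definition dterm (n : nat) (A : mat) (al h : R) (M i j k : nat) : R :=
  h ^ k * matpow n A k i j * cf (al * INR k + 1) M.

Definition yv n A al h M i j := Series (dterm n A al h M i j).

Lemma dterm_0 n A al h M i j : dterm n A al h M i j O = matid i j.
Proof. unfold dterm. simpl. replace (al * 0 + 1) with 1 by ring. rewrite cf_one. ring. Qed.

Lemma disc_rec n A al h M i j :
  (i < n)%nat -> (j < n)%nat ->
  (forall M' i' j', (M' <= M)%nat -> (i' < n)%nat -> (j' < n)%nat -> ex_series (dterm n A al h M' i' j')) ->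
  yv n A al h M i j - h * fsum n (fun l => A i l * yv n A al h M l j)
  = matid i j * cf (1 - al) M - fsum M (fun j' => cf (- al) (S j') * yv n A al h (M - S j') i j).
Proof.
  intros Hi Hj Hex.
  assert (H1 : is_series (fun k => h * fsum n (fun l => A i l * dterm n A al h M l j k))
                         (h * fsum n (fun l => A i l * yv n A al h M l j))).
  { apply is_series_Rscal. apply is_series_fsum. intros l Hl.
    apply is_series_Rscal. apply Series_correct. apply Hex; auto. }
  assert (H2 : is_series (fun k => fsum (S M) (fun j' => cf (- al) j' * dterm n A al h (M - j') i j (S k)))
                         (fsum (S M) (fun j' => cf (- al) j' * (yv n A al h (M - j') i j - matid i j)))).
  { apply is_series_fsum. intros l Hl. apply is_series_Rscal.
    rewrite <- (dterm_0 n A al h (M - l) i j). apply is_series_Rshift. apply Series_correct. apply Hex; auto; lia. }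
  assert (Heq : forall k, h * fsum n (fun l => A i l * dterm n A al h M l j k) =
     fsum (S M) (fun j' => cf (- al) j' * dterm n A al h (M - j') i j (S k))).
  { intros k. unfold dterm.
    rewrite (fsum_ext n _ (fun l => (h ^ k * cf (al * INR k + 1) M) * (A i l * matpow n A k l j))) by (intros; ring).
    rewrite fsum_scal.
    change (fsum n (fun l => A i l * matpow n A k l j)) with (matpow n A (S k) i j).
    rewrite (fsum_ext (S M) _ (fun j' => (h ^ S k * matpow n A (S k) i j) * (cf (- al) j' * cf (al * INR (S k) + 1) (M - j')))) by (intros; ring).
    rewrite fsum_scal.
    change (fsum (S M) (fun j' => cf (- al) j' * cf (al * INR (S k) + 1) (M - j'))) with (Vd (- al) (al * INR (S k) + 1) M).
    rewrite vandermonde. replace (- al + (al * INR (S k) + 1)) with (al * INR k + 1) by (rewrite S_INR; ring).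
    simpl pow. ring. }
  apply (is_series_ext _ _ _ Heq) in H1.
  assert (E := is_series_unique _ _ H1). rewrite (is_series_unique _ _ H2) in E.
  rewrite <- E.
  rewrite (fsum_ext (S M) _ (fun j' => cf (- al) j' * yv n A al h (M - j') i j + (- matid i j) * cf (- al) j')) by (intros; ring).
  rewrite fsum_plus, fsum_scal, sum_cf_neg, fsum_shift.
  simpl (cf (- al) 0). rewrite Nat.sub_0_r. ring.
Qed.

Lemma disc_yv_pos n A al h N :
  (forall i l, (i < n)%nat -> (l < n)%nat -> i <> l -> 0 <= A i l) ->
  0 < al <= 1 -> 0 <= h -> (forall i, (i < n)%nat -> h * fsum n (fun l => Rabs (A i l)) < 1) ->
  (forall M' i' j', (M' <= N)%nat -> (i' < n)%nat -> (j' < n)%nat -> ex_series (dterm n A al h M' i' j')) ->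
  forall M i j, (M <= N)%nat -> (i < n)%nat -> (j < n)%nat -> 0 <= yv n A al h M i j.
Proof.
  intros Hoff Hal Hh Hrow Hex.
  assert (Main : forall K M, (M <= K)%nat -> (M <= N)%nat -> forall i j, (i < n)%nat -> (j < n)%nat -> 0 <= yv n A al h M i j).
  { induction K; intros M HMK HMN i j Hi Hj.
    - apply (disc_pos n A h (fun i => yv n A al h M i j) (fun i => matid i j * cf (1 - al) M - fsum M (fun j' => cf (- al) (S j') * yv n A al h (M - S j') i j))); auto.
      + intros i' Hi'. replace M with O by lia. simpl. unfold matid.
        destruct (Nat.eqb i' j); lra.
      + intros i' Hi'. apply disc_rec; auto. intros; apply Hex; auto; lia.
    - apply (disc_pos n A h (fun i => yv n A al h M i j) (fun i => matid i j * cf (1 - al) M - fsum M (fun j' => cf (- al) (S j') * yv n A al h (M - S j') i j))); auto.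
      + intros i' Hi'.
        assert (0 <= matid i' j * cf (1 - al) M).
        { apply Rmult_le_pos. unfold matid; destruct (Nat.eqb i' j); lra. apply cf_nonneg; lra. }
        assert (fsum M (fun j' => cf (- al) (S j') * yv n A al h (M - S j') i' j) <= 0).
        { apply Rle_trans with (fsum M (fun _ => 0)). apply fsum_le. intros j' Hj'.
          assert (cf (- al) (S j') <= 0) by (apply cf_negalpha; auto; lia).
          assert (0 <= yv n A al h (M - S j') i' j) by (apply IHK; auto; lia).
          nra. rewrite fsum_zero; auto; lra. }
        lra.
      + intros i' Hi'. apply disc_rec; auto. intros; apply Hex; auto; lia. }
  intros M i j HM Hi Hj. apply (Main M M); auto.
Qed.

Lemma lim_abs_le (u : nat -> R) l d N0 : Un_cv u l -> (forall N, (N0 <= N)%nat -> Rabs (u N) <= d) -> Rabs l <= d.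
Proof.
  intros Hu Hb. destruct (Rle_dec (Rabs l) d) as [|H]; auto. exfalso.
  destruct (Hu (Rabs l - d) ltac:(lra)) as [N HN].
  specialize (HN (max N N0) ltac:(lia)). specialize (Hb (max N N0) ltac:(lia)).
  unfold R_dist in HN. pose proof (Rabs_triang_inv l (u (max N N0))).
  rewrite <- Rabs_Ropp, Ropp_minus_distr in HN. lra.
Qed.

Lemma ex_series_dom (a D : nat -> R) : (forall k, Rabs (a k) <= D k) -> ex_series D -> ex_series a.
Proof. intros H HD. apply (ex_series_le (V:=R_CompleteNormedModule) a D); auto. Qed.

Lemma series_tail_le (a D : nat -> R) K : (forall k, Rabs (a k) <= D k) -> ex_series D ->
  Rabs (Series (fun k => a (K + k)%nat)) <= Series (fun k => D (K + k)%nat).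
Proof.
  intros H HD. assert (HDt : ex_series (fun k => D (K + k)%nat)) by (apply ex_series_incr_n; auto).
  eapply Rle_trans. apply Series_Rabs. apply ex_series_dom with (fun k => D (K + k)%nat); auto.
  intros; rewrite Rabs_Rabsolu; auto.
  apply Series_le; auto. intros; split; [apply Rabs_pos|auto].
Qed.

Lemma tail_cv (D : nat -> R) : ex_series D -> Un_cv (fun K => Series (fun k => D (S K + k)%nat)) 0.
Proof.
  intros HD. assert (Hs := Series_correct D HD). apply is_series_Reals in Hs.
  apply Un_cv_ext with (fun K => Series D - sum_f_R0 D K).
  { intros K. rewrite (Series_incr_n D (S K)) by (auto; lia). simpl. ring. }
  intros e He. destruct (Hs e He) as [N HN]. exists N. intros n Hn. specialize (HN n Hn).
  unfold R_dist in *. rewrite Rminus_0_r, <- Rabs_Ropp. replace (- (Series D - sum_f_R0 D n)) with (sum_f_R0 D n - Series D) by ring. auto.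
Qed.

Lemma finsum_cv (T : nat -> nat -> R) (Tl : nat -> R) m :
  (forall k, Un_cv (fun N => T N k) (Tl k)) -> Un_cv (fun N => sum_f_R0 (fun k => T N k - Tl k) m) 0.
Proof.
  intros H. induction m; simpl.
  - replace 0 with (Tl O - Tl O) by ring. apply CV_minus. apply H. intros e He; exists O; intros; unfold R_dist; rewrite Rminus_eq_0, Rabs_R0; auto.
  - replace 0 with (0 + (Tl (S m) - Tl (S m))) by ring. apply CV_plus; auto. apply CV_minus. apply H.
    intros e He; exists O; intros; unfold R_dist; rewrite Rminus_eq_0, Rabs_R0; auto.
Qed.

Lemma tannery (T : nat -> nat -> R) (Tl D : nat -> R) N0 :
  (forall k, Un_cv (fun N => T N k) (Tl k)) ->
  (forall N k, (N0 <= N)%nat -> Rabs (T N k) <= D k) ->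
  ex_series D ->
  ex_series Tl /\ Un_cv (fun N => Series (T N)) (Series Tl).
Proof.
  intros Hcv Hb HD.
  assert (HTl : forall k, Rabs (Tl k) <= D k) by (intros k; apply (lim_abs_le _ _ _ N0 (Hcv k)); auto).
  assert (HexTl : ex_series Tl) by (apply ex_series_dom with D; auto).
  split; auto.
  intros e He.
  destruct (tail_cv D HD (e / 3) ltac:(lra)) as [K HK].
  specialize (HK K ltac:(lia)). unfold R_dist in HK. rewrite Rminus_0_r in HK.
  assert (Ht0 : 0 <= Series (fun k => D (S K + k)%nat)).
  { apply Rle_trans with (Rabs (Series (fun k => Tl (S K + k)%nat))). apply Rabs_pos. apply series_tail_le; auto. }
  rewrite Rabs_right in HK by lra.
  destruct (finsum_cv T Tl K Hcv (e / 3) ltac:(lra)) as [N1 HN1].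
  exists (max N0 N1). intros N HN. unfold R_dist.
  specialize (HN1 N ltac:(lia)). unfold R_dist in HN1. rewrite Rminus_0_r in HN1.
  assert (HexT : ex_series (T N)) by (apply ex_series_dom with D; auto; intros; apply Hb; lia).
  rewrite (Series_incr_n (T N) (S K)), (Series_incr_n Tl (S K)) by (auto; lia). simpl pred.
  assert (E : sum_f_R0 (T N) K - sum_f_R0 Tl K = sum_f_R0 (fun k => T N k - Tl k) K).
  { clear. induction K; simpl; auto. rewrite <- IHK. ring. }
  assert (H1 := series_tail_le (T N) D (S K) ltac:(intros; apply Hb; lia) HD).
  assert (H2 := series_tail_le Tl D (S K) HTl HD).
  replace (sum_f_R0 (T N) K + Series (fun k => T N (S K + k)%nat) - (sum_f_R0 Tl K + Series (fun k => Tl (S K + k)%nat)))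
    with (sum_f_R0 (fun k => T N k - Tl k) K + (Series (fun k => T N (S K + k)%nat) - Series (fun k => Tl (S K + k)%nat))) by (rewrite <- E; ring).
  eapply Rle_lt_trans. apply Rabs_triang.
  eapply Rle_lt_trans. apply Rplus_le_compat_l. apply Rabs_triang.
  rewrite Rabs_Ropp. lra.
Qed.

Lemma cv_ge0 (u : nat -> R) l N0 : Un_cv u l -> (forall N, (N0 <= N)%nat -> 0 <= u N) -> 0 <= l.
Proof.
  intros Hu Hb. destruct (Rle_dec 0 l) as [|H]; auto. exfalso.
  destruct (Hu (- l) ltac:(lra)) as [N HN]. specialize (HN (max N N0) ltac:(lia)).
  specialize (Hb (max N N0) ltac:(lia)). unfold R_dist in HN. apply Rabs_lt_between in HN. lra.
Qed.

Lemma series_sum_eq (a : nat -> R) l : is_series a l -> series_sum a = l.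
Proof.
  intros H. apply is_series_Reals in H. unfold series_sum.
  destruct (ClassicalEpsilon.excluded_middle_informative _) as [H1|H1].
  - destruct (ClassicalEpsilon.constructive_indefinite_description _ H1) as [l' Hl']. simpl. eapply uniqueness_sum; eauto.
  - exfalso; apply H1; eauto.
Qed.

Lemma pow_exp_bound (x : R) (m : nat) : 0 <= x -> (0 < m)%nat -> x ^ m <= (2 * INR m) ^ m * exp (x / 2).
Proof.
  intros Hx Hm. assert (Hm1 : 1 <= INR m) by (apply (le_INR 1); lia).
  assert (Hy : x / (2 * INR m) <= exp (x / (2 * INR m))) by (pose proof (exp_ineq1_le (x / (2 * INR m))); lra).
  assert (Hexp : exp (x / 2) = exp (x / (2 * INR m)) ^ m) by (rewrite <- exp_mult_nat; f_equal; field; lra).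
  rewrite Hexp, <- Rpow_mult_distr.
  replace (x ^ m) with (((2 * INR m) * (x / (2 * INR m))) ^ m) by (f_equal; field; lra).
  apply pow_incr. split. apply Rmult_le_pos; [lra|]. apply Rmult_le_pos; [lra|]. left; apply Rinv_0_lt_compat; lra.
  apply Rmult_le_compat_l; lra.
Qed.

Lemma cf_le_pow s N : 0 <= s -> cf (s + 1) N <= (1 + s) ^ N.
Proof.
  intros Hs. induction N. simpl; lra.
  change (cf (s + 1) (S N)) with (cf (s + 1) N * (INR N + (s + 1)) / INR (S N)).
  simpl pow. rewrite S_INR. pose proof (pos_INR N).
  assert (H1 : (INR N + (s + 1)) / (INR N + 1) <= 1 + s).
  { apply Rmult_le_reg_r with (INR N + 1). lra. unfold Rdiv. rewrite Rmult_assoc, Rinv_l by lra. nra. }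
  assert (H0 : 0 <= cf (s + 1) N) by (apply cf_nonneg; lra).
  assert (H2 : 0 <= (INR N + (s + 1)) / (INR N + 1)) by (apply Rdiv_le_0_compat; lra).
  replace (cf (s + 1) N * (INR N + (s + 1)) / (INR N + 1)) with (cf (s + 1) N * ((INR N + (s + 1)) / (INR N + 1))) by (field; lra).
  rewrite Rmult_comm. apply Rmult_le_compat; auto.
Qed.

Lemma cf_mono b M N : 1 <= b -> (M <= N)%nat -> cf b M <= cf b N.
Proof.
  intros Hb HMN. induction HMN. lra.
  change (cf b (S m)) with (cf b m * (INR m + b) / INR (S m)).
  assert (0 <= cf b m) by (apply cf_nonneg; lra). rewrite S_INR. pose proof (pos_INR m).
  apply Rle_trans with (cf b m); auto.
  apply Rmult_le_reg_r with (INR m + 1). lra. unfold Rdiv. rewrite Rmult_assoc, Rmult_assoc, Rinv_l by lra. nra.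
Qed.

Lemma rN_mono s N0 N : (0 < N0)%nat -> (N0 <= N)%nat -> 0 <= s -> rN s N <= rN s N0.
Proof.
  intros H0 HN Hs. induction HN. lra.
  eapply Rle_trans; [apply rN_decr|]; auto; lia.
Qed.

Lemma Rpower_inv x z : 0 < x -> Rpower (/ x) z = / Rpower x z.
Proof. intros Hx. unfold Rpower. rewrite ln_Rinv by auto. rewrite <- exp_Ropp. f_equal. ring. Qed.

Lemma Rpower_pow_mult x a k : 0 < x -> Rpower x a ^ k = Rpower x (a * INR k).
Proof. intros Hx. rewrite <- Rpower_pow by apply Rpower_pos. apply Rpower_mult. Qed.

Lemma hpow t al N k : 0 < t -> (0 < N)%nat ->
  Rpower (t / INR N) al ^ k = Rpower t (al * INR k) / Rpower (INR N) (al * INR k).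
Proof.
  intros Ht HN. assert (0 < INR N) by (apply lt_0_INR; auto).
  rewrite Rpower_pow_mult by (apply Rdiv_lt_0_compat; auto).
  unfold Rdiv. rewrite <- Rpower_mult_distr by (auto; apply Rinv_0_lt_compat; auto).
  rewrite Rpower_inv; auto.
Qed.

Lemma dterm_eq n A al t N i j k : 0 < t -> (0 < N)%nat ->
  dterm n A al (Rpower (t / INR N) al) N i j k = Rpower t (al * INR k) * matpow n A k i j * rN (al * INR k) N.
Proof.
  intros Ht HN. unfold dterm, rN. rewrite hpow by auto.
  assert (0 < Rpower (INR N) (al * INR k)) by apply Rpower_pos.
  field. lra.
Qed.

Lemma geom_poly q p k : 0 <= q <= / 4 -> (0 < p)%nat -> q ^ k * (1 + INR k) ^ p <= (2 * INR p) ^ p * 2 * (/ 2) ^ k.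
Proof.
  intros Hq Hp.
  assert (H1 := pow_exp_bound (1 + INR k) p ltac:(pose proof (pos_INR k); lra) Hp).
  assert (He : exp ((1 + INR k) / 2) = exp (/ 2) * exp (/ 2) ^ k).
  { rewrite <- exp_mult_nat, <- exp_plus. f_equal. field. }
  assert (He2 : exp (/ 2) <= 2).
  { assert (exp (/ 2) * exp (/ 2) = exp 1) by (rewrite <- exp_plus; f_equal; field).
    assert (exp 1 <= 3) by apply exp_le_3.
    assert (0 < exp (/ 2)) by apply exp_pos. nra. }
  assert (Hep := exp_pos (/ 2)).
  assert (Hqk : 0 <= q ^ k) by (apply pow_le; lra).
  assert (Hpp : 0 <= (2 * INR p) ^ p) by (apply pow_le; pose proof (pos_INR p); lra).
  apply Rle_trans with (q ^ k * ((2 * INR p) ^ p * exp ((1 + INR k) / 2))).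
  apply Rmult_le_compat_l; auto.
  rewrite He.
  assert (Eq : q ^ k * ((2 * INR p) ^ p * (exp (/ 2) * exp (/ 2) ^ k)) = (2 * INR p) ^ p * exp (/ 2) * (q * exp (/ 2)) ^ k).
  { rewrite (Rpow_mult_distr q (exp (/ 2))). ring. }
  rewrite Eq.
  apply Rmult_le_compat. apply Rmult_le_pos; lra. apply pow_le; nra.
  apply Rmult_le_compat_l; lra.
  apply pow_incr. split. nra. nra.
Qed.

Lemma rpow_pos_eq t y : 0 < t -> rpow t y = Rpower t y.
Proof. intros Ht. unfold rpow. destruct (Req_EM_T t 0); [lra|auto]. Qed.

Lemma Rpower_div_al t N al : 0 < t -> 0 < N -> Rpower (t / N) al = Rpower t al / Rpower N al.
Proof.
  intros Ht HN. unfold Rdiv. rewrite <- Rpower_mult_distr by (auto; apply Rinv_0_lt_compat; auto).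
  rewrite Rpower_inv; auto.
Qed.

Lemma big_N (X al : R) : 0 < X -> 0 < al -> exists N0, (0 < N0)%nat /\ forall N, (N0 <= N)%nat -> X <= Rpower (INR N) al.
Proof.
  intros HX Hal. destruct (nat_above (Rpower X (/ al))) as [m Hm]. exists (S m). split. lia.
  intros N HN. assert (HNm : INR (S m) <= INR N) by (apply le_INR; auto).
  rewrite S_INR in HNm.
  assert (Hp := Rpower_pos X (/ al)).
  replace X with (Rpower (Rpower X (/ al)) al) at 1.
  apply Rle_Rpower_l. lra. split; auto. lra.
  rewrite Rpower_mult. replace (/ al * al) with 1 by (field; lra). apply Rpower_1; auto.
Qed.

Lemma main_tpos n A al t i j :
  (forall i j, (i < n)%nat -> (j < n)%nat -> i <> j -> 0 <= A i j) ->
  0 < al -> al <= 1 -> 0 < t -> (i < n)%nat -> (j < n)%nat ->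
  ex_series (ML_term n A al t i j) /\ 0 <= Series (ML_term n A al t i j).
Proof.
  intros Hoff Hal0 Hal1 Ht Hi Hj.
  set (a1 := fsum n (fun i => fsum n (fun l => Rabs (A i l))) + 1).
  assert (HA : forall i l, (i < n)%nat -> (l < n)%nat -> Rabs (A i l) <= a1).
  { intros i' l Hi' Hl. unfold a1.
    assert (Rabs (A i' l) <= fsum n (fun l => Rabs (A i' l))) by (apply (fsum_term_le n (fun l => Rabs (A i' l))); auto; intros; apply Rabs_pos).
    assert (fsum n (fun l => Rabs (A i' l)) <= fsum n (fun i => fsum n (fun l => Rabs (A i l)))).
    { apply (fsum_term_le n (fun i => fsum n (fun l => Rabs (A i l)))); auto. intros; apply fsum_ge0; intros; apply Rabs_pos. }
    lra. }
  assert (Ha1 : 0 < a1).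
  { unfold a1. assert (0 <= fsum n (fun i => fsum n (fun l => Rabs (A i l)))) by (apply fsum_ge0; intros; apply fsum_ge0; intros; apply Rabs_pos). lra. }
  set (c := INR n * a1).
  assert (Hc : 0 <= c) by (unfold c; apply Rmult_le_pos; [apply pos_INR|lra]).
  assert (Hrow : forall i, (i < n)%nat -> fsum n (fun l => Rabs (A i l)) <= c).
  { intros i' Hi'. unfold c. rewrite <- fsum_const. apply fsum_le. intros; apply HA; auto. }
  set (ta := Rpower t al). assert (Hta : 0 < ta) by apply Rpower_pos.
  set (X := 4 * ta * c + 1).
  assert (HX : 0 < X) by (unfold X; nra).
  destruct (big_N X al HX Hal0) as [N0 [HN0 HbigN]].
  set (D := fun k => Rpower t (al * INR k) * c ^ k * rN (al * INR k) N0).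
  assert (HD0 : forall k, 0 <= D k).
  { intros k. unfold D. apply Rmult_le_pos. apply Rmult_le_pos. left; apply Rpower_pos. apply pow_le; auto.
    left; apply rN_pos. apply Rmult_le_pos; [lra|apply pos_INR]. }
  assert (HDs : ex_series D).
  { set (P0 := Rpower (INR N0) al).
    assert (HP0 : X <= P0) by (apply HbigN; lia).
    set (q := ta * c / P0).
    assert (HP0p : 0 < P0) by lra.
    assert (Hq : 0 <= q <= / 4).
    { unfold q. split. apply Rdiv_le_0_compat; nra.
      apply Rmult_le_reg_r with P0; auto. unfold Rdiv. rewrite Rmult_assoc, Rinv_l by lra. unfold X in HP0. nra. }
    apply ex_series_dom with (fun k => (2 * INR N0) ^ N0 * 2 * (/ 2) ^ k).
    - intros k. rewrite Rabs_right by (apply Rle_ge; auto).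
      eapply Rle_trans; [|apply (geom_poly q N0 k Hq HN0)].
      unfold D, rN.
      assert (E1 : Rpower t (al * INR k) = ta ^ k) by (unfold ta; rewrite Rpower_pow_mult; auto).
      assert (E2 : Rpower (INR N0) (al * INR k) = P0 ^ k) by (unfold P0; rewrite Rpower_pow_mult; auto; apply lt_0_INR; auto).
      rewrite E1, E2.
      assert (E3 : ta ^ k * c ^ k * (cf (al * INR k + 1) N0 / P0 ^ k) = q ^ k * cf (al * INR k + 1) N0).
      { unfold q. unfold Rdiv. rewrite !Rpow_mult_distr, pow_inv. field. apply pow_nonzero. lra. }
      rewrite E3. apply Rmult_le_compat_l. apply pow_le; lra.
      eapply Rle_trans. apply cf_le_pow. apply Rmult_le_pos; [lra|apply pos_INR].
      apply pow_incr. split. apply Rplus_le_le_0_compat; [lra|]. apply Rmult_le_pos; [lra|apply pos_INR].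
      assert (al * INR k <= INR k) by (pose proof (pos_INR k); nra). lra.
    - apply (ex_series_scal_l (V:=R_NormedModule) ((2 * INR N0) ^ N0 * 2)). apply ex_series_geom. rewrite Rabs_right; lra. }
  set (h := fun N : nat => Rpower (t / INR N) al).
  assert (Hdom : forall N M i' j' k, (N0 <= N)%nat -> (M <= N)%nat -> (i' < n)%nat -> (j' < n)%nat ->
     Rabs (dterm n A al (h N) M i' j' k) <= D k).
  { intros N M i' j' k HN HM Hi' Hj'.
    assert (HNp : (0 < N)%nat) by lia.
    unfold dterm, h. rewrite hpow by auto.
    assert (Hr1 := Rpower_pos t (al * INR k)). assert (Hr2 := Rpower_pos (INR N) (al * INR k)).
    assert (Hcf := cf_mono (al * INR k + 1) M N ltac:(pose proof (pos_INR k); nra) HM).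
    assert (Hcf0 : 0 <= cf (al * INR k + 1) M) by (apply cf_nonneg; pose proof (pos_INR k); nra).
    assert (HP := matpow_bound n A a1 k i' j' HA Hi' Hj'). fold c in HP.
    rewrite !Rabs_mult, Rabs_right with (r := Rpower t (al * INR k) / Rpower (INR N) (al * INR k)) by (apply Rle_ge, Rdiv_le_0_compat; lra).
    rewrite (Rabs_right (cf _ M)) by lra.
    apply Rle_trans with (Rpower t (al * INR k) * c ^ k * rN (al * INR k) N).
    { unfold rN. replace (al * INR k + 1) with (al * INR k + 1) by ring.
      replace (Rpower t (al * INR k) * c ^ k * (cf (al * INR k + 1) N / Rpower (INR N) (al * INR k)))
        with (Rpower t (al * INR k) / Rpower (INR N) (al * INR k) * c ^ k * cf (al * INR k + 1) N) by (field; lra).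
      apply Rmult_le_compat. apply Rmult_le_pos. apply Rdiv_le_0_compat; lra. apply Rabs_pos. auto.
      apply Rmult_le_compat_l. apply Rdiv_le_0_compat; lra. auto. auto. }
    unfold D. apply Rmult_le_compat_l. apply Rmult_le_pos. lra. apply pow_le; auto.
    apply rN_mono; auto. apply Rmult_le_pos; [lra|apply pos_INR]. }
  assert (Hcv : forall k, Un_cv (fun N => dterm n A al (h N) N i j k) (ML_term n A al t i j k)).
  { intros k. destruct k as [|k].
    - apply Un_cv_ext with (fun _ => matid i j). intros N. symmetry. apply dterm_0.
      unfold ML_term. simpl matpow. replace (al * INR 0 + 1) with 1 by (simpl; ring).
      rewrite Gamma1. replace (al * INR 0) with 0 by (simpl; ring).
      unfold rpow. destruct (Req_EM_T t 0); [lra|]. destruct (Req_EM_T 0 0); [|lra].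
      rewrite Rpower_O by auto. replace (1 * matid i j / 1) with (matid i j) by field.
      intros ee Hee. exists O. intros; unfold R_dist; rewrite Rminus_eq_0, Rabs_R0; auto.
    - set (s := al * INR (S k)).
      assert (Hs : 0 < s) by (unfold s; apply Rmult_lt_0_compat; auto; apply lt_0_INR; lia).
      destruct (euler s Hs) as [HG HE].
      apply (CV_shift _ 1).
      apply Un_cv_ext with (fun N => (Rpower t s * matpow n A (S k) i j) * rN s (S N)).
      { intros N. unfold h. replace (N + 1)%nat with (S N) by lia. rewrite dterm_eq by (auto; lia). reflexivity. }
      unfold ML_term. fold s. rewrite rpow_pos_eq by auto.
      replace (Rpower t s * matpow n A (S k) i j / Gamma (s + 1)) with ((Rpower t s * matpow n A (S k) i j) * / Gamma (s + 1)) by (field; lra).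
      apply CV_mult; auto. intros ee Hee. exists O. intros; unfold R_dist; rewrite Rminus_eq_0, Rabs_R0; auto. }
  destruct (tannery (fun N => dterm n A al (h N) N i j) (ML_term n A al t i j) D N0 Hcv) as [Hex Hlim].
  { intros N k HN. apply Hdom; auto. }
  auto.
  split; auto.
  apply (cv_ge0 _ _ N0 Hlim).
  intros N HN.
  assert (HNp : (0 < N)%nat) by lia.
  change (Series (dterm n A al (h N) N i j)) with (yv n A al (h N) N i j).
  apply (disc_yv_pos n A al (h N) N); auto.
  - unfold h. left; apply Rpower_pos.
  - intros i' Hi'. unfold h. rewrite Rpower_div_al by (auto; apply lt_0_INR; auto). fold ta.
    assert (HXN := HbigN N HN).
    assert (Hr : fsum n (fun l => Rabs (A i' l)) <= c) by auto.
    assert (Hr0 : 0 <= fsum n (fun l => Rabs (A i' l))) by (apply fsum_ge0; intros; apply Rabs_pos).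
    assert (HPN : 0 < Rpower (INR N) al) by apply Rpower_pos.
    apply Rle_lt_trans with (ta * c / Rpower (INR N) al).
    { apply Rle_trans with (ta / Rpower (INR N) al * c).
      apply Rmult_le_compat_l; [apply Rdiv_le_0_compat; lra | lra]. right; field; lra. }
    apply Rmult_lt_reg_r with (Rpower (INR N) al); auto. unfold Rdiv. rewrite Rmult_assoc, Rinv_l by lra.
    unfold X in HXN. nra.
  - intros M' i' j' HM Hi' Hj'. apply ex_series_dom with D; auto.
Qed.

Lemma rpow_zero_exp t y : y = 0 -> rpow t y = 1.
Proof.
  intros ->. unfold rpow. destruct (Req_EM_T t 0). destruct (Req_EM_T 0 0); lra.
  unfold Rpower. rewrite Rmult_0_l. apply exp_0.
Qed.

Lemma is_series_first (a : nat -> R) : (forall k, a (S k) = 0) -> is_series a (a O).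
Proof.
  intros H. apply is_series_decr_1.
  eapply is_series_ext; [|match goal with |- is_series _ ?p => replace p with 0 end; [apply is_series_R0|]].
  intros k; simpl; rewrite H; auto.
  change (0 = a O + - a O :> R). ring.
Qed.

Lemma ML_term_0 n A al t i j : ML_term n A al t i j O = matid i j.
Proof.
  unfold ML_term. rewrite rpow_zero_exp by (simpl; ring).
  replace (al * INR 0 + 1) with 1 by (simpl; ring). rewrite Gamma1. simpl. field.
Qed.

Lemma ML_t0 n A al i j : 0 < al -> is_series (ML_term n A al 0 i j) (matid i j).
Proof.
  intros Hal. rewrite <- (ML_term_0 n A al 0 i j). apply is_series_first.
  intros k. unfold ML_term, rpow. destruct (Req_EM_T 0 0); [|lra].
  destruct (Req_EM_T (al * INR (S k)) 0) as [e0|].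
  - exfalso. assert (0 < al * INR (S k)) by (apply Rmult_lt_0_compat; auto; apply lt_0_INR; lia). lra.
  - unfold Rdiv. ring.
Qed.

Theorem mainTheorem6 (n : nat) (A : mat) (alpha t : R)
  (hoff : forall i j, (i < n)%nat -> (j < n)%nat -> i <> j -> 0 <= A i j)
  (hdiag : forall j, (j < n)%nat ->
     A j j = - fsum n (fun i => if Nat.eqb i j then 0 else A i j))
  (halpha0 : 0 < alpha) (halpha1 : alpha <= 1) (ht : 0 <= t) :
  (forall i j, (i < n)%nat -> (j < n)%nat ->
     exists l, infinite_sum (ML_term n A alpha t i j) l) /\
  (forall i j, (i < n)%nat -> (j < n)%nat -> 0 <= ML_matrix n A alpha t i j) /\
  (forall j, (j < n)%nat -> fsum n (fun i => ML_matrix n A alpha t i j) = 1).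
Proof.
  assert (Hconv : forall i j, (i < n)%nat -> (j < n)%nat -> ex_series (ML_term n A alpha t i j)).
  { intros i j Hi Hj. destruct (Req_dec t 0) as [->|Ht].
    - eexists. apply ML_t0; auto.
    - apply main_tpos; auto. lra. }
  assert (HML : forall i j, (i < n)%nat -> (j < n)%nat -> ML_matrix n A alpha t i j = Series (ML_term n A alpha t i j)).
  { intros i j Hi Hj. unfold ML_matrix. apply series_sum_eq. apply Series_correct; auto. }
  split; [|split].
  - intros i j Hi Hj. destruct (Hconv i j Hi Hj) as [l Hl]. exists l. apply is_series_Reals; auto.
  - intros i j Hi Hj. rewrite HML by auto. destruct (Req_dec t 0) as [->|Ht].
    + rewrite (is_series_unique _ _ (ML_t0 n A alpha i j halpha0)). unfold matid. destruct (Nat.eqb i j); lra.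
    + apply main_tpos; auto. lra.
  - intros j Hj.
    rewrite (fsum_ext n _ (fun i => Series (ML_term n A alpha t i j))) by (intros; apply HML; auto).
    assert (Hs := is_series_fsum n (fun i => ML_term n A alpha t i j) (fun i => Series (ML_term n A alpha t i j))
                    (fun i Hi => Series_correct _ (Hconv i j Hi Hj))).
    apply is_series_unique in Hs. rewrite <- Hs.
    apply is_series_unique. simpl.
    replace 1 with (fsum n (fun i => ML_term n A alpha t i j O)).
    apply is_series_first.
    + intros k. unfold ML_term.
      rewrite (fsum_ext n _ (fun i => (rpow t (alpha * INR (S k)) / Gamma (alpha * INR (S k) + 1)) * matpow n A (S k) i j)) by (intros; unfold Rdiv; ring).
      rewrite fsum_scal, matpow_colsum; auto. ring.
      intros l Hl. apply colsum_zero; auto.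
    + rewrite (fsum_ext n _ (fun i => matid i j)) by (intros; apply ML_term_0). apply matid_colsum; auto.
Qed.
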